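(* Let $P$ and $Q$ be Standard Meadow Forms (SMFs). Then each of the terms $P+Q$, $P\cdot Q$, $-P$ and $P^{-1}$ is provably equal, from the axioms $\mathrm{Md}$ in equational logic, to an SMF whose variables are among the variables occurring in $P$ and $Q$.
   Context: The signature of meadows is $\Sigma_m=(0,1,+,\cdot,-,{}^{-1})$. $\mathrm{Md}$ is the set of equations: $(x+y)+z=x+(y+z)$, $x+y=y+x$, $x+0=x$, $x+(-x)=0$, $(x\cdot y)\cdot z=x\cdot(y\cdot z)$, $x\cdot y=y\cdot x$, $1\cdot x=x$, $x\cdot(y+z)=x\cdot y+x\cdot z$, $(x^{-1})^{-1}=x$, $x\cdot(x\cdot x^{-1})=x$. Notation: $t/u$ abbreviates $t\cdot u^{-1}$; $1_t$ abbreviates $t\cdot t^{-1}$ and $0_t$ abbreviates $1-1_t$ (i.e. $1+(-1_t)$). A polynomial is a $\Sigma_m$-term not containing ${}^{-1}$. SMFs of level $n$ are defined inductively: an SMF of level $0$ is any term $s/t$ with $s,t$ polynomials; an SMF of level $n+1$ is any term $0_t\cdot P+1_t\cdot Q$ with $t$ a polynomial and $P,Q$ SMFs of level $n$. A term is an SMF if it is an SMF of some level $n\in\mathbb N$. *)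

(* Defs.v *)
From Stdlib Require Import List.

Inductive term : Type :=
| Var : nat -> term
| Zero : term
| One : term
| Add : term -> term -> term
| Mul : term -> term -> term
| Neg : term -> term
| Inv : term -> term.

Definition Div (t u : term) : term := Mul t (Inv u).
Definition one_ (t : term) : term := Mul t (Inv t).
Definition zero_ (t : term) : term := Add One (Neg (one_ t)).

Inductive Md_eq : term -> term -> Prop :=
| md_addA x y z : Md_eq (Add (Add x y) z) (Add x (Add y z))
| md_addC x y : Md_eq (Add x y) (Add y x)
| md_add0 x : Md_eq (Add x Zero) x
| md_addN x : Md_eq (Add x (Neg x)) Zero
| md_mulA x y z : Md_eq (Mul (Mul x y) z) (Mul x (Mul y z))
| md_mulC x y : Md_eq (Mul x y) (Mul y x)
| md_mul1 x : Md_eq (Mul One x) x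
| md_mulD x y z : Md_eq (Mul x (Add y z)) (Add (Mul x y) (Mul x z))
| md_invK x : Md_eq (Inv (Inv x)) x
| md_RIL x : Md_eq (Mul x (Mul x (Inv x))) x
| md_refl t : Md_eq t t
| md_sym t u : Md_eq t u -> Md_eq u t
| md_trans t u v : Md_eq t u -> Md_eq u v -> Md_eq t v
| md_cong_add t t' u u' : Md_eq t t' -> Md_eq u u' -> Md_eq (Add t u) (Add t' u')
| md_cong_mul t t' u u' : Md_eq t t' -> Md_eq u u' -> Md_eq (Mul t u) (Mul t' u')
| md_cong_neg t t' : Md_eq t t' -> Md_eq (Neg t) (Neg t')
| md_cong_inv t t' : Md_eq t t' -> Md_eq (Inv t) (Inv t').

Fixpoint is_poly (t : term) : Prop :=
  match t with
  | Var _ | Zero | One => True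
  | Add a b | Mul a b => is_poly a /\ is_poly b
  | Neg a => is_poly a
  | Inv _ => False
  end.

Inductive SMF_level : nat -> term -> Prop :=
| smf0 s t : is_poly s -> is_poly t -> SMF_level 0 (Div s t)
| smfS n t P Q : is_poly t -> SMF_level n P -> SMF_level n Q ->
    SMF_level (S n) (Add (Mul (zero_ t) P) (Mul (one_ t) Q)).

Definition SMF (t : term) : Prop := exists n, SMF_level n t.

Fixpoint occurs (v : nat) (t : term) : Prop :=
  match t with
  | Var w => v = w
  | Zero | One => False
  | Add a b | Mul a b => occurs v a \/ occurs v b
  | Neg a | Inv a => occurs v a
  end.

Definition provably_SMF_in (t P Q : term) : Prop :=
  exists R, SMF R /\ (forall v, occurs v R -> occurs v P \/ occurs v Q)
            /\ Md_eq t R.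

(* Main.v *)
Require Import Defs.
From Stdlib Require Import Setoid Morphisms Ring Arith Lia.

#[global] Instance md_equiv : Equivalence Md_eq.
Proof. split; [exact md_refl | exact md_sym | exact md_trans]. Qed.
#[global] Instance add_proper : Proper (Md_eq ==> Md_eq ==> Md_eq) Add.
Proof. intros ? ? ? ? ? ?; now apply md_cong_add. Qed.
#[global] Instance mul_proper : Proper (Md_eq ==> Md_eq ==> Md_eq) Mul.
Proof. intros ? ? ? ? ? ?; now apply md_cong_mul. Qed.
#[global] Instance neg_proper : Proper (Md_eq ==> Md_eq) Neg.
Proof. intros ? ? ?; now apply md_cong_neg. Qed.
#[global] Instance inv_proper : Proper (Md_eq ==> Md_eq) Inv.
Proof. intros ? ? ?; now apply md_cong_inv. Qed.

Definition SubT x y := Add x (Neg y).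
Lemma md_rt : ring_theory Zero One Add Mul SubT Neg Md_eq.
Proof.
  split; intros.
  - rewrite md_addC. apply md_add0.
  - apply md_addC.
  - symmetry; apply md_addA.
  - apply md_mul1.
  - apply md_mulC.
  - symmetry; apply md_mulA.
  - rewrite md_mulC, md_mulD, (md_mulC z x), (md_mulC z y). reflexivity.
  - reflexivity.
  - apply md_addN.
Qed.
Lemma md_ext : ring_eq_ext Add Mul Neg Md_eq.
Proof. constructor; typeclasses eauto. Qed.
Add Ring mdR : md_rt (setoid md_equiv md_ext).

Lemma KK x : Md_eq (Mul x (Mul (Inv x) (Inv x))) (Inv x).
Proof.
  transitivity (Mul (Inv x) (Mul (Inv x) (Inv (Inv x)))).
  - rewrite md_invK. ring.
  - apply md_RIL.
Qed.
Lemma KR x : Md_eq (Mul (Mul x x) (Inv x)) x.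
Proof. transitivity (Mul x (Mul x (Inv x))); [ring | apply md_RIL]. Qed.

Lemma inv_unique x w : Md_eq (Mul (Mul x x) w) x -> Md_eq (Mul (Mul w w) x) w ->
  Md_eq (Inv x) w.
Proof.
  intros H1 H2.
  transitivity (Mul (Inv x) (Mul x w)).
  - transitivity (Mul (Mul (Inv x) (Inv x)) (Mul (Mul x x) w)).
    + rewrite H1. rewrite <- (KK x) at 1. ring.
    + transitivity (Mul (Mul x (Mul (Inv x) (Inv x))) (Mul x w)); [ring|].
      rewrite KK. reflexivity.
  - transitivity (Mul (Mul (Mul w w) x) (Mul x (Inv x))); [rewrite H2; ring|].
    transitivity (Mul (Mul w w) (Mul (Mul x x) (Inv x))); [ring|].
    rewrite KR, H2. reflexivity.
Qed.

Lemma inv_mul x y : Md_eq (Inv (Mul x y)) (Mul (Inv x) (Inv y)).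
Proof.
  apply inv_unique.
  - transitivity (Mul (Mul (Mul x x) (Inv x)) (Mul (Mul y y) (Inv y))); [ring|].
    rewrite !KR. reflexivity.
  - transitivity (Mul (Mul x (Mul (Inv x) (Inv x))) (Mul y (Mul (Inv y) (Inv y)))); [ring|].
    rewrite !KK. reflexivity.
Qed.

Lemma inv_split_aux e f A B : Md_eq (Mul e e) e -> Md_eq (Mul f f) f -> Md_eq (Mul e f) Zero ->
  Md_eq (Inv (Add (Mul f A) (Mul e B))) (Add (Mul f (Inv A)) (Mul e (Inv B))).
Proof.
  intros He Hf Hef.
  apply inv_unique.
  - transitivity (Add (Mul (Mul (Mul f f) f) ((Mul (Mul A A) (Inv A))))
       (Add (Mul (Mul e f) (Add (Mul f (Mul (Mul A A) (Inv B))) (Add (Mul f (Mul (Add One One) (Mul (Mul A B) (Inv A))))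
                 (Add (Mul e (Mul (Add One One) (Mul (Mul A B) (Inv B)))) (Mul e (Mul (Mul B B) (Inv A)))))))
            (Mul (Mul (Mul e e) e) ((Mul (Mul B B) (Inv B)))))); [ring|].
    rewrite Hef, !Hf, !He, !KR. ring.
  - assert (K2 : forall x, Md_eq (Mul (Mul (Inv x) (Inv x)) x) (Inv x)) by (intro x; rewrite <- (KK x) at 3; ring).
    transitivity (Add (Mul (Mul (Mul f f) f) ((Mul (Mul (Inv A) (Inv A)) A)))
       (Add (Mul (Mul e f) (Add (Mul f (Mul (Mul (Inv A) (Inv A)) B)) (Add (Mul f (Mul (Add One One) (Mul (Mul (Inv A) (Inv B)) A)))
                 (Add (Mul e (Mul (Add One One) (Mul (Mul (Inv A) (Inv B)) B))) (Mul e (Mul (Mul (Inv B) (Inv B)) A))))))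
            (Mul (Mul (Mul e e) e) ((Mul (Mul (Inv B) (Inv B)) B))))); [ring|].
    rewrite Hef, !Hf, !He, !K2. ring.
Qed.

Lemma inv_split e A B : Md_eq (Mul e e) e ->
  Md_eq (Inv (Add (Mul (Add One (Neg e)) A) (Mul e B)))
        (Add (Mul (Add One (Neg e)) (Inv A)) (Mul e (Inv B))).
Proof.
  intro He. apply inv_split_aux; auto.
  { transitivity (Add (Add One (Neg e)) (Add (Mul e e) (Neg e))); [ring|].
    rewrite He. ring. }
  { transitivity (Add e (Neg (Mul e e))); [ring|]. rewrite He. ring. }
Qed.

Definition vin (R : term) (S : nat -> Prop) := forall v, occurs v R -> S v.
Definition good (S : nat -> Prop) (X : term) := exists R, SMF R /\ vin R S /\ Md_eq X R.

Ltac vintac := let v := fresh "v" in let Hv := fresh "Hv" in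
  intros v Hv; unfold vin, Div, zero_, one_ in *; cbn in *; intuition eauto.

Lemma good_eq S X Y : Md_eq X Y -> good S Y -> good S X.
Proof. intros H [R [H1 [H2 H3]]]. exists R; split; [|split]; auto. now rewrite H. Qed.

Lemma vin_br t P Q S : vin (Add (Mul (zero_ t) P) (Mul (one_ t) Q)) S ->
  vin t S /\ vin P S /\ vin Q S.
Proof. intro H; repeat split; intros v Hv; apply H; cbn; tauto. Qed.

Lemma lift n P : SMF_level n P -> forall m, n <= m ->
  exists P', SMF_level m P' /\ vin P' (fun v => occurs v P) /\ Md_eq P P'.
Proof.
  intros HP m Hle; induction Hle.
  - exists P; split; [|split]; auto; [intros v Hv; exact Hv | reflexivity].
  - destruct IHHle as [P' [H1 [H2 H3]]].
    exists (Add (Mul (zero_ One) P') (Mul (one_ One) P')); split; [|split].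
    + constructor; cbn; auto.
    + vintac.
    + rewrite H3. unfold zero_. ring.
Qed.

Lemma branch S t A B : is_poly t -> vin t S -> good S A -> good S B ->
  good S (Add (Mul (zero_ t) A) (Mul (one_ t) B)).
Proof.
  intros Ht Hvt [RA [[na HA] [HA2 HA3]]] [RB [[nb HB] [HB2 HB3]]].
  destruct (lift _ _ HA (Nat.max na nb)) as [RA' [HA'1 [HA'2 HA'3]]]; [lia|].
  destruct (lift _ _ HB (Nat.max na nb)) as [RB' [HB'1 [HB'2 HB'3]]]; [lia|].
  exists (Add (Mul (zero_ t) RA') (Mul (one_ t) RB')); split; [|split].
  - exists (Datatypes.S (Nat.max na nb)); constructor; auto.
  - vintac.
  - rewrite HA3, HB3, HA'3, HB'3. reflexivity.
Qed.

Lemma good0 S s t : is_poly s -> is_poly t -> vin s S -> vin t S -> good S (Div s t).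
Proof.
  intros. exists (Div s t); split; [|split].
  - exists 0; constructor; auto.
  - vintac.
  - reflexivity.
Qed.

Lemma neg_good S n P : SMF_level n P -> vin P S -> good S (Neg P).
Proof.
  intros HP; induction HP; intros Hv.
  - apply good_eq with (Div (Neg s) t); [unfold Div; ring|].
    apply good0; cbn; auto; vintac.
  - destruct (vin_br _ _ _ _ Hv) as [H1 [H2 H3]].
    apply good_eq with (Add (Mul (zero_ t) (Neg P)) (Mul (one_ t) (Neg Q))); [ring|].
    apply branch; auto.
Qed.

Lemma one_idem t : Md_eq (Mul (one_ t) (one_ t)) (one_ t).
Proof. unfold one_. transitivity (Mul (Mul (Mul t t) (Inv t)) (Inv t)); [ring|]. rewrite KR. reflexivity. Qed.

Lemma inv_good S n P : SMF_level n P -> vin P S -> good S (Inv P).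
Proof.
  intros HP; induction HP; intros Hv.
  - apply good_eq with (Div t s).
    + unfold Div. rewrite inv_mul, md_invK. ring.
    + apply good0; auto; vintac.
  - destruct (vin_br _ _ _ _ Hv) as [H1 [H2 H3]].
    apply good_eq with (Add (Mul (zero_ t) (Inv P)) (Mul (one_ t) (Inv Q))).
    + unfold zero_. apply inv_split, one_idem.
    + apply branch; auto.
Qed.

Section Op.
Variable op : term -> term -> term.
Hypothesis op_l : forall t A B C, Md_eq (op (Add (Mul (zero_ t) A) (Mul (one_ t) B)) C)
   (Add (Mul (zero_ t) (op A C)) (Mul (one_ t) (op B C))).
Hypothesis op_r : forall t A B C, Md_eq (op C (Add (Mul (zero_ t) A) (Mul (one_ t) B)))
   (Add (Mul (zero_ t) (op C A)) (Mul (one_ t) (op C B))).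
Hypothesis op_0 : forall S s t u v, is_poly s -> is_poly t -> is_poly u -> is_poly v ->
  vin s S -> vin t S -> vin u S -> vin v S -> good S (op (Div s t) (Div u v)).

Lemma op_good0 S s t m Q : is_poly s -> is_poly t -> vin s S -> vin t S ->
  SMF_level m Q -> vin Q S -> good S (op (Div s t) Q).
Proof.
  intros Hs Ht Hvs Hvt HQ; induction HQ; intros Hv.
  - apply op_0; auto; vintac.
  - destruct (vin_br _ _ _ _ Hv) as [H1 [H2 H3]].
    eapply good_eq; [apply op_r|]. apply branch; auto.
Qed.

Lemma op_good S n P m Q : SMF_level n P -> vin P S -> SMF_level m Q -> vin Q S -> good S (op P Q).
Proof.
  intros HP; induction HP; intros Hv HQ HvQ.
  - apply op_good0 with m; auto; vintac.
  - destruct (vin_br _ _ _ _ Hv) as [H1 [H2 H3]].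
    eapply good_eq; [apply op_l|]. apply branch; auto.
Qed.
End Op.

Lemma add_0 S s t u v : is_poly s -> is_poly t -> is_poly u -> is_poly v ->
  vin s S -> vin t S -> vin u S -> vin v S -> good S (Add (Div s t) (Div u v)).
Proof.
  intros.
  apply good_eq with (Add (Mul (zero_ t) (Div u v)) (Mul (one_ t)
     (Add (Mul (zero_ v) (Div s t)) (Mul (one_ v) (Div (Add (Mul s v) (Mul u t)) (Mul t v)))))).
  - unfold Div, zero_, one_. rewrite inv_mul. symmetry.
    transitivity (Add (Add (Mul u (Inv v)) (Neg (Mul u (Mul t (Mul (Inv t) (Inv v))))))
      (Add (Add (Mul s (Mul t (Mul (Inv t) (Inv t))))
                (Neg (Mul (Mul s (Mul t (Mul (Inv t) (Inv t)))) (Mul v (Inv v)))))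
           (Add (Mul (Mul s (Mul t (Mul (Inv t) (Inv t)))) (Mul v (Mul v (Mul (Inv v) (Inv v)))))
                (Mul (Mul u t) (Mul (Mul t (Mul (Inv t) (Inv t))) (Mul v (Mul (Inv v) (Inv v)))))))).
    + ring.
    + rewrite !KK. ring.
  - apply branch; auto.
    + apply good0; auto.
    + apply branch; auto; apply good0; cbn; auto; vintac.
Qed.

Lemma mul_0 S s t u v : is_poly s -> is_poly t -> is_poly u -> is_poly v ->
  vin s S -> vin t S -> vin u S -> vin v S -> good S (Mul (Div s t) (Div u v)).
Proof.
  intros.
  apply good_eq with (Div (Mul s u) (Mul t v)).
  - unfold Div. rewrite inv_mul. ring.
  - apply good0; cbn; auto; vintac.
Qed.

Theorem lemma1 (P Q : term) :
  SMF P -> SMF Q ->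
  provably_SMF_in (Add P Q) P Q /\
  provably_SMF_in (Mul P Q) P Q /\
  provably_SMF_in (Neg P) P Q /\
  provably_SMF_in (Inv P) P Q.
Proof.
  intros [n HP] [m HQ].
  set (S := fun v => occurs v P \/ occurs v Q).
  assert (HvP : vin P S) by (intros v Hv; left; exact Hv).
  assert (HvQ : vin Q S) by (intros v Hv; right; exact Hv).
  split; [|split; [|split]].
  - apply (op_good Add) with n m; auto.
    + intros. unfold zero_. ring.
    + intros. unfold zero_. ring.
    + exact add_0.
  - apply (op_good Mul) with n m; auto.
    + intros. unfold zero_. ring.
    + intros. unfold zero_. ring.
    + exact mul_0.
  - apply (neg_good S n); auto.
  - apply (inv_good S n); auto.
Qed.
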